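(* Let $\mathbb{V}$ be a finite vocabulary, $\theta$ a language model, $k\ge 1$, $B\ge 1$, $T\ge 1$, a prefix $\mathbf{z}_{\mathrm{pre}}$ and a target suffix $\mathbf{z}_{\mathrm{suf}}\in\mathbb{V}^T$, as described in the context. Run top-$k$ constrained beam search ($k$-CBS) with beam width $B$, and let $C_T$ be its final candidate set. Let $F_{(B)}\subseteq C_T$ consist of the (at most) $B$ pairs of $C_T$ with the largest second coordinate (ties broken by a fixed deterministic rule). For $\mathsf{dist}\in\{\mathsf{Hamming},\mathsf{Levenshtein}\}$ and $\varepsilon\ge 0$ define $$\mathrm{LB}^{(B)}_{\varepsilon,\mathsf{dist}}=\sum_{(\mathbf{z}_{\mathrm{pre}}\Vert\mathbf{x},\,\ell)\in F_{(B)}\,:\,\mathbf{x}\in\mathbb{B}^{\mathsf{dist}}_{\varepsilon}(\mathbf{z}_{\mathrm{suf}})}\exp(\ell).$$ Then $\mathrm{LB}^{(B)}_{\varepsilon,\mathsf{dist}}\le p^{\mathsf{dist}}_{\mathbf{z},\varepsilon}$.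
   Context: Let $\mathbb{V}$ be a finite vocabulary containing a designated end-of-sequence token EOS. A language model $\theta$ assigns to every finite token sequence (history) $\mathbf{h}$ a probability distribution $\Pr_\theta(\cdot\mid\mathbf{h})$ on $\mathbb{V}$ with $\Pr_\theta(v\mid\mathbf{h})>0$ for all $v$. For an integer $k\ge1$ and a history $\mathbf{h}$, let $S(\mathbf{h})\subseteq\mathbb{V}$ be the set of $k$ tokens with the largest values of $\Pr_\theta(\cdot\mid\mathbf{h})$ (ties broken by a fixed deterministic rule). The top-$k$ decoding distribution is $\Pr_{\theta,\phi}(v\mid\mathbf{h})=\Pr_\theta(v\mid\mathbf{h})/\sum_{u\in S(\mathbf{h})}\Pr_\theta(u\mid\mathbf{h})$ for $v\in S(\mathbf{h})$ and $0$ otherwise. Fix a prefix $\mathbf{z}_{\mathrm{pre}}\in\mathbb{V}^L$ and a target suffix $\mathbf{z}_{\mathrm{suf}}\in\mathbb{V}^T$. For $\mathbf{x}\in\mathbb{V}^T$, $\Pr_{\theta,\phi}(\mathbf{x}\mid\mathbf{z}_{\mathrm{pre}})=\prod_{t=1}^T\Pr_{\theta,\phi}(x_t\mid\mathbf{z}_{\mathrm{pre}}\Vert x_{1:t-1})$ ($\Vert$ is concatenation). For $\mathbf{b},\mathbf{c}\in\mathbb{V}^T$, $\mathsf{Hamming}(\mathbf{b},\mathbf{c})=\#\{t: b_t\ne c_t\}$ and $\mathsf{Levenshtein}(\mathbf{b},\mathbf{c})$ is the minimum number of unit-cost single-token substitutions, insertions and deletions transforming $\mathbf{b}$ into $\mathbf{c}$.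 The $\varepsilon$-ball is $\mathbb{B}^{\mathsf{dist}}_{\varepsilon}(\mathbf{z}_{\mathrm{suf}})=\{\mathbf{v}\in\mathbb{V}^T:\mathsf{dist}(\mathbf{v},\mathbf{z}_{\mathrm{suf}})\le\varepsilon\}$, and the near-verbatim extraction probability is $p^{\mathsf{dist}}_{\mathbf{z},\varepsilon}=\sum_{\mathbf{v}\in\mathbb{B}^{\mathsf{dist}}_{\varepsilon}(\mathbf{z}_{\mathrm{suf}})}\Pr_{\theta,\phi}(\mathbf{v}\mid\mathbf{z}_{\mathrm{pre}})$. Top-$k$ constrained beam search ($k$-CBS) with beam width $B$: set $L_0=\{(\mathbf{z}_{\mathrm{pre}},0)\}$. For $t=1,\dots,T$: let $C_t=\{(\mathbf{h}\Vert v,\ \ell+\log\Pr_{\theta,\phi}(v\mid\mathbf{h})):(\mathbf{h},\ell)\in L_{t-1},\ v\in S(\mathbf{h})\}$. If $t=T$, output $F=C_T$. If $t<T$, delete from $C_t$ every pair whose history ends in EOS, and let $L_t$ be the (at most) $B$ pairs of $C_t$ with the largest second coordinate (deterministic tie-breaking). Every pair in $C_T$ has the form $(\mathbf{z}_{\mathrm{pre}}\Vert\mathbf{x},\ell)$ with $\mathbf{x}\in\mathbb{V}^T$. *)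

(* Defs.v *)
From HB Require Import structures.
From mathcomp Require Import all_boot all_order all_algebra.
From mathcomp Require Import boolp reals sequences exp.
Set Implicit Arguments. Unset Strict Implicit. Unset Printing Implicit Defensive.
Import Order.TTheory GRing.Theory Num.Theory.
Local Open Scope ring_scope.

Section LMDefs.
Variable V : finType.

Definition hamming (b c : seq V) : nat := count (fun p => p.1 != p.2) (zip b c).

Definition edit1 (s s' : seq V) : Prop :=
  exists p q a,
    [\/ s = p ++ a :: q /\ s' = p ++ q,
        s = p ++ q /\ s' = p ++ a :: q
      | exists b, s = p ++ a :: q /\ s' = p ++ b :: q ].

Inductive edits : nat -> seq V -> seq V -> Prop :=
| edits0 s : edits 0 s s
| editsS n s s' s'' : edit1 s s' -> edits n s' s'' -> edits n.+1 s s''.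

Lemma edits_trans m n x y z : edits m x y -> edits n y z -> edits (m + n) x z.
Proof.
elim=> [s|k s s' s'' e _ IH] // H.
by rewrite addSn; apply: editsS e (IH H).
Qed.

Lemma edits_del (b : seq V) : edits (size b) b [::].
Proof.
elim: b => [|a b IH] /=; first exact: edits0.
apply: editsS IH; exists [::], b, a; by apply: Or31.
Qed.

Lemma edits_ins (c s : seq V) : edits (size c) s (s ++ c).
Proof.
elim: c s => [|a c IH] s /=; first by rewrite cats0; exact: edits0.
apply: (editsS (s' := s ++ [:: a])).
  by exists s, [::], a; apply: Or32; rewrite cats0.
by have := IH (s ++ [:: a]); rewrite -catA.
Qed.

Lemma edits_exists (b c : seq V) : exists n, `[< edits n b c >].
Proof.
exists (size b + size c); apply/asboolP.
by have := edits_trans (edits_del b) (edits_ins c [::]).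
Qed.

Definition levenshtein (b c : seq V) : nat := ex_minn (edits_exists b c).

Variable R : realType.

Definition ends_in (EOS : V) (h : seq V) : bool := (h != [::]) && (last EOS h == EOS).

Definition topk_prob (theta : seq V -> V -> R) (S : seq V -> {set V})
    (h : seq V) (v : V) : R :=
  if v \in S h then theta h v / \sum_(u in S h) theta h u else 0.

Definition expand (theta : seq V -> V -> R) (S : seq V -> {set V})
    (L : seq (seq V * R)) : seq (seq V * R) :=
  flatten [seq [seq (rcons p.1 v, p.2 + ln (topk_prob theta S p.1 v)) | v <- enum (S p.1)]
          | p <- L].

(** Beam after t steps (t < T): L_t. [sel B C] keeps the (at most) B best pairs. *)
Definition beam (EOS : V) (theta : seq V -> V -> R) (S : seq V -> {set V})
    (sel : nat -> seq (seq V * R) -> seq (seq V * R)) (B : nat) (zpre : seq V)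
    (t : nat) : seq (seq V * R) :=
  iter t (fun L => sel B [seq p <- expand theta S L | ~~ ends_in EOS p.1]) [:: (zpre, 0)].

Definition final_cands (EOS : V) (theta : seq V -> V -> R) (S : seq V -> {set V})
    (sel : nat -> seq (seq V * R) -> seq (seq V * R)) (B T : nat) (zpre : seq V) :=
  expand theta S (beam EOS theta S sel B zpre T.-1).

Definition in_ball (d : seq V -> seq V -> nat) (T : nat) (zsuf : seq V) (eps : R)
    (v : seq V) : bool := (size v == T) && ((d v zsuf)%:R <= eps).

Definition LB (EOS : V) (theta : seq V -> V -> R) (S : seq V -> {set V})
    (sel : nat -> seq (seq V * R) -> seq (seq V * R)) (B T : nat) (zpre zsuf : seq V)
    (d : seq V -> seq V -> nat) (eps : R) : R :=
  \sum_(p <- sel B (final_cands EOS theta S sel B T zpre)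
        | (take (size zpre) p.1 == zpre) && in_ball d T zsuf eps (drop (size zpre) p.1))
     expR p.2.

Definition extract_prob (theta : seq V -> V -> R) (S : seq V -> {set V}) (T : nat)
    (zpre zsuf : seq V) (d : seq V -> seq V -> nat) (eps : R) : R :=
  \sum_(x : T.-tuple V | in_ball d T zsuf eps x)
     \prod_(t < T) topk_prob theta S (zpre ++ take t x) (tnth x t).

End LMDefs.

Definition is_topk (V : finType) (R : realType) (theta : seq V -> V -> R) (k : nat)
    (S : seq V -> {set V}) : Prop :=
  forall h, #|S h| = minn k #|V| /\
    (forall u v, u \in S h -> v \notin S h -> theta h v <= theta h u).

(** Specification of a "keep the (at most) n pairs with largest second coordinate"
    selection rule (any deterministic tie-breaking): the output is a sub-multiset of
    the input of size min(n, |input|) and no discarded pair beats a kept one. *)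
Definition is_top_selector (V : finType) (R : realType)
    (sel : nat -> seq (seq V * R) -> seq (seq V * R)) : Prop :=
  forall n C,
    (exists2 s, subseq s C & perm_eq (sel n C) s) /\
    size (sel n C) = minn n (size C) /\
    (forall p q, p \in sel n C -> q \in C -> q \notin sel n C -> q.2 <= p.2).

(* Main.v *)
Require Import Defs.
From HB Require Import structures.
From mathcomp Require Import all_boot all_order all_algebra.
From mathcomp Require Import boolp reals sequences exp.
Import Order.TTheory GRing.Theory Num.Theory.
Set Implicit Arguments. Unset Strict Implicit.
Local Open Scope ring_scope.

Lemma topk_pos (V : finType) (R : realType) (theta : seq V -> V -> R) (S : seq V -> {set V}) h v :
  (forall h v, 0 < theta h v) -> v \in S h -> 0 < topk_prob theta S h v.
Proof.
move=> tp vS; rewrite /topk_prob vS divr_gt0 //.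
rewrite (bigD1 v) //=; apply: ltr_wpDr (tp _ _).
by apply: sumr_ge0 => u _; exact/ltW.
Qed.

Lemma topk_ge0 (V : finType) (R : realType) (theta : seq V -> V -> R) (S : seq V -> {set V}) h v :
  (forall h v, 0 < theta h v) -> 0 <= topk_prob theta S h v.
Proof.
move=> tp; rewrite /topk_prob; case: ifP => _ //.
by apply: divr_ge0; [exact/ltW | apply: sumr_ge0 => u _; exact/ltW].
Qed.

Definition inv (V : finType) (R : realType) (EOS : V) (theta : seq V -> V -> R) (S : seq V -> {set V})
  (zpre : seq V) (n : nat) (L : seq (seq V * R)) :=
  uniq (map fst L) /\ forall p, p \in L -> exists x : seq V,
    [/\ size x = n, p.1 = zpre ++ x &
        expR p.2 = \prod_(t < n) topk_prob theta S (zpre ++ take t x) (nth EOS x t)].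

Lemma expand_inv (V : finType) (R : realType) (EOS : V) (theta : seq V -> V -> R) (S : seq V -> {set V})
  zpre n L : (forall h v, 0 < theta h v) ->
  inv EOS theta S zpre n L -> inv EOS theta S zpre n.+1 (expand theta S L).
Proof.
move=> tp [uL HL]; split.
  have -> : map fst (expand theta S L) =
      [seq rcons h v | h <- map fst L, v <- enum (S h)].
    rewrite /expand map_flatten -map_comp /= map_comp; congr flatten.
    rewrite -!map_comp; apply: eq_map => p; rewrite /= -map_comp //.
  apply: (@allpairs_uniq_dep _ (fun _ => V)) => //; first by move=> h _; exact: enum_uniq.
  by move=> [a b] [c e] _ _ /= /rcons_inj [-> ->].
move=> p /allpairsPdep [q [v [qL vS ->]]] /=.
have [x [sx q1 q2]] := HL q qL.
exists (rcons x v); split.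
- by rewrite size_rcons sx.
- by rewrite q1 rcons_cat.
rewrite expRD q2 lnK; last first.
  by rewrite posrE; apply: topk_pos => //; rewrite -mem_enum.
rewrite big_ord_recr /=; congr (_ * _).
  apply: eq_bigr => t _ /=.
  rewrite -cats1 takel_cat ?nth_cat; last by rewrite sx ltnW.
  by rewrite sx ltn_ord.
by rewrite -cats1 take_size_cat // nth_cat sx ltnn subnn q1.
Qed.

Lemma sel_inv (V : finType) (R : realType) (EOS : V) (theta : seq V -> V -> R) (S : seq V -> {set V})
  zpre n (sel : nat -> seq (seq V * R) -> seq (seq V * R)) B L :
  is_top_selector sel ->
  inv EOS theta S zpre n L -> inv EOS theta S zpre n (sel B L).
Proof.
move=> st [uL HL]; have [[s ss ps] _] := st B L; split.
  rewrite (perm_uniq (perm_map fst ps)).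
  exact: subseq_uniq (map_subseq fst ss) uL.
by move=> p; rewrite (perm_mem ps) => /(mem_subseq ss) /HL.
Qed.

Lemma filter_inv (V : finType) (R : realType) (EOS : V) (theta : seq V -> V -> R) (S : seq V -> {set V})
  zpre n (P : pred (seq V * R)) L :
  inv EOS theta S zpre n L -> inv EOS theta S zpre n (filter P L).
Proof.
move=> [uL HL]; split.
  exact: subseq_uniq (map_subseq fst (filter_subseq P L)) uL.
by move=> p; rewrite mem_filter => /andP [_ /HL].
Qed.

Lemma beam_inv (V : finType) (R : realType) (EOS : V) (theta : seq V -> V -> R) (S : seq V -> {set V})
  zpre (sel : nat -> seq (seq V * R) -> seq (seq V * R)) B t :
  (forall h v, 0 < theta h v) -> is_top_selector sel ->
  inv EOS theta S zpre t (beam EOS theta S sel B zpre t).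
Proof.
move=> tp st; elim: t => [|t IH].
  split => // p; rewrite inE => /eqP -> /=.
  by exists [::]; split; rewrite ?cats0 ?big_ord0 ?expR0.
rewrite /beam iterS -/(beam EOS theta S sel B zpre t).
by apply: sel_inv => //; apply: filter_inv; apply: expand_inv.
Qed.

Lemma sum_uniq_le (X : finType) (R : realType) (s : seq X) (f : X -> R) :
  uniq s -> (forall x, 0 <= f x) -> \sum_(x <- s) f x <= \sum_x f x.
Proof.
move=> us f0; rewrite big_uniq // [X in _ <= X](bigID (fun x => x \in s)) /=.
by rewrite lerDl; apply: sumr_ge0.
Qed.

Definition tupof (V : finType) (T : nat) (EOS : V) (n : nat) (h : seq V) : T.-tuple V :=
  insubd (nseq_tuple T EOS) (drop n h).

Theorem theorem2 (V : finType) (EOS : V) (R : realType)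
    (theta : seq V -> V -> R)
    (theta_pos : forall h v, 0 < theta h v)
    (theta_sum : forall h, \sum_(v : V) theta h v = 1)
    (k : nat) (k_ge1 : (1 <= k)%N)
    (S : seq V -> {set V}) (S_topk : is_topk theta k S)
    (B : nat) (B_ge1 : (1 <= B)%N)
    (sel : nat -> seq (seq V * R) -> seq (seq V * R)) (sel_top : is_top_selector sel)
    (T : nat) (T_ge1 : (1 <= T)%N)
    (zpre : seq V) (zsuf : T.-tuple V)
    (eps : R) (eps_ge0 : 0 <= eps)
    (d : seq V -> seq V -> nat) (d_kind : d = @hamming V \/ d = @levenshtein V) :
  LB EOS theta S sel B T zpre zsuf d eps <= extract_prob theta S T zpre zsuf d eps.
Proof.
have HF : inv EOS theta S zpre T (sel B (final_cands EOS theta S sel B T zpre)).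
  apply: sel_inv => //; rewrite /final_cands.
  have Hb : inv EOS theta S zpre T.-1 (beam EOS theta S sel B zpre T.-1).
    exact: beam_inv.
  by have := expand_inv theta_pos Hb; rewrite prednK.
move: HF; set F := sel B _ => -[uF HF].
pose tup := tupof T EOS (size zpre).
pose g (y : T.-tuple V) : R := if in_ball d T zsuf eps y then
   \prod_(t < T) topk_prob theta S (zpre ++ take t y) (tnth y t) else 0.
have -> : LB EOS theta S sel B T zpre zsuf d eps = \sum_(y <- map tup (map fst F)) g y.
  rewrite /LB -/F big_mkcond !big_map; apply: eq_big_seq => p pF.
  have [x [sx p1 p2]] := HF p pF.
  have sxT : size x == T by rewrite sx.
  have -> : tup p.1 = Tuple sxT.
    by apply: val_inj; rewrite /= /tup /tupof p1 drop_size_cat // insubdK // unfold_in /= sx.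
  rewrite /g p1 take_size_cat // eqxx andTb drop_size_cat // p2.
  congr (if _ then _ else _); apply: eq_bigr => t _.
  by rewrite (tnth_nth EOS).
have -> : extract_prob theta S T zpre zsuf d eps = \sum_y g y.
  by rewrite /extract_prob big_mkcond.
apply: sum_uniq_le.
  rewrite map_inj_in_uniq // => h1 h2 /mapP [p1 p1F ->] /mapP [p2 p2F ->] e.
  have [x1 [sx1 e1 _]] := HF p1 p1F; have [x2 [sx2 e2 _]] := HF p2 p2F.
  have := congr1 val e; rewrite /tup /tupof e1 e2 !drop_size_cat //.
  by rewrite !insubdK ?unfold_in /= ?sx1 ?sx2 // => ->.
move=> y; rewrite /g; case: ifP => // _.
by apply: prodr_ge0 => t _; apply: topk_ge0.
Qed.
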